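(* Let $\tau_i$ be an HC task that switches to HC mode at time $t_i\le t$, and suppose $t-t_i<D_i-D_i^L$. Then no job of $\tau_i$ can generate a demand of $C_i^H$ time units in the interval $[0,t)$. Consequently, $\tau_i$ generates maximal demand during $[0,t)$ when its first job is released at time $0$ and all successive jobs are released as soon as possible (i.e. at times $kT_i$, $k=0,1,2,\dots$).
   Context: A mixed-criticality sporadic task is $\tau_i=(T_i,L_i,\{C_i^L,C_i^H\},D_i)$: jobs are released with minimum separation $T_i$, $L_i\in\{LC,HC\}$, $D_i\le T_i$ is the relative deadline, and $C_i^L<C_i^H$ for HC tasks. Each task has a tightened deadline $D_i^L\le D_i$. An HC task is in LC mode until the instant $t_i$ at which some job requests to execute for more than $C_i^L$; from then on it is in HC mode. While in LC mode, a job released at $r$ must receive $C_i^L$ time units by $r+D_i^L$; once the task is in HC mode, a job may require up to $C_i^H$ units in total, to be received by its actual deadline $r+D_i$ (in particular a job can require $C_i^H$ only if it has not completed its LC-mode obligation before $t_i$, i.e. $r+D_i^L\ge t_i$). The demand of a task during $[0,t)$ is the amount of execution that must be completed within $[0,t)$ in order to meet all of its deadlines that fall in $[0,t)$; execution with deadline after $t$ contributes no demand. ''Maximal demand'' is over all legal release sequences (minimum separation $T_i$) and all legal execution behaviours. *)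

(* Defs.v *)
From mathcomp Require Import all_boot.
Set Implicit Arguments. Unset Strict Implicit. Unset Printing Implicit Defensive.

(* A single HC task tau_i = (T, HC, {CL, CH}, D) with tightened deadline DL,
   switching to HC mode at time ti. *)

(* A job released at r may require C^H (i.e. is still concerned by HC mode)
   iff it has not completed its LC-mode obligation before ti: r + DL >= ti. *)
Definition hc_job (DL ti r : nat) : bool := ti <= r + DL.

Definition job_deadline (D DL ti r : nat) : nat :=
  if hc_job DL ti r then r + D else r + DL.

Definition legal_exec (CL CH DL ti r c : nat) : Prop :=
  c <= (if hc_job DL ti r then CH else CL).

Definition job_demand (D DL ti t r c : nat) : nat :=
  if job_deadline D DL ti r <= t then c else 0.

Definition legal_releases (T : nat) (rs : seq nat) : Prop :=
  sorted (fun a b => a + T <= b) rs.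

Definition legal_behaviour (CL CH DL ti : nat) (rs : seq nat) (c : nat -> nat)
  : Prop :=
  forall i, i < size rs -> legal_exec CL CH DL ti (nth 0 rs i) (c i).

Definition task_demand (D DL ti t : nat) (rs : seq nat) (c : nat -> nat) : nat :=
  \sum_(i < size rs) job_demand D DL ti t (nth 0 rs i) (c i).

Definition periodic_releases (T n : nat) : seq nat :=
  [seq k * T | k <- iota 0 n].

(* Main.v *)
Require Import Defs.
From mathcomp Require Import all_boot.
From mathcomp Require Import zify.

Lemma path_ge (T x : nat) (s : seq nat) :
  path (fun a b => a + T <= b) x s ->
  forall i, i < size s -> x + i.+1 * T <= nth 0 s i.
Proof.
elim: s x => [|y s IH] x //= /andP[hxy hp] [|j] /= hj.
  by lia.
have := IH y hp j hj. lia.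
Qed.

Lemma sorted_ge (T : nat) (s : seq nat) :
  sorted (fun a b => a + T <= b) s ->
  forall i, i < size s -> i * T <= nth 0 s i.
Proof.
case: s => [|x s] //= hp [|j] /= hj; first by [].
have := @path_ge T x s hp j hj. lia.
Qed.

Lemma term_bound (CL CH D DL ti t r c : nat) :
  DL <= D -> ti <= t -> t - ti < D - DL ->
  legal_exec CL CH DL ti r c ->
  job_demand D DL ti t r c <= (r + DL < ti) * CL.
Proof.
rewrite /legal_exec /job_demand /job_deadline /hc_job => h1 h2 h3.
case: (leqP ti (r + DL)) => hc /= hle.
  case: ifP => // hd. lia.
rewrite mul1n. case: ifP => //.
Qed.

Lemma sum_trunc (f : nat -> nat) (N n : nat) :
  (forall i, n <= i -> f i = 0) ->
  \sum_(0 <= i < N) f i <= \sum_(0 <= i < n) f i.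
Proof.
move=> hf.
case: (leqP N n) => hNn.
  rewrite (@big_cat_nat _ _ _ N 0 n _ _ (leq0n N) hNn) /=. by apply: leq_addr.
rewrite (@big_cat_nat _ _ _ n 0 N _ _ (leq0n n) (ltnW hNn)) /=.
have -> : \sum_(n <= i < N) f i = 0.
  rewrite big_nat_cond big1 // => i /andP[/andP[hi _] _]; exact: hf.
by rewrite addn0.
Qed.

Theorem lemma2 (T CL CH D DL ti t : nat) :
  DL <= D -> D <= T -> CL < CH ->
  ti <= t -> t - ti < D - DL ->
  (* no job can generate a demand of CH in [0,t) *)
  (forall r c, legal_exec CL CH DL ti r c -> job_demand D DL ti t r c <> CH) /\
  (* maximal demand is reached by the synchronous periodic release pattern *)
  (forall (rs : seq nat) (c : nat -> nat),
      legal_releases T rs -> legal_behaviour CL CH DL ti rs c ->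
      forall n, t <= n * T ->
      exists c' : nat -> nat,
        legal_behaviour CL CH DL ti (periodic_releases T n) c' /\
        task_demand D DL ti t rs c <=
          task_demand D DL ti t (periodic_releases T n) c').
Proof.
move=> h1 h2 h3 h4 h5; split.
  move=> r c hl hd.
  have := @term_bound CL CH D DL ti t r c h1 h4 h5 hl. rewrite hd.
  case: (r + DL < ti) => /=; lia.
move=> rs c hrs hc n hn.
have szp : size (periodic_releases T n) = n by rewrite size_map size_iota.
have nthp : forall k, k < n -> nth 0 (periodic_releases T n) k = k * T.
  by move=> k hk; rewrite (nth_map 0) ?size_iota // nth_iota.
exists (fun k => if hc_job DL ti (k * T) then 0 else CL); split.
  move=> i; rewrite szp => hi; rewrite nthp // /legal_exec.
  by case: ifP.
rewrite /task_demand szp.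
apply: (@leq_trans (\sum_(i < size rs) (i * T + DL < ti) * CL)).
  apply: leq_sum => i _.
  apply: leq_trans (@term_bound CL CH D DL ti t _ _ h1 h4 h5 (hc i (ltn_ord i))) _.
  have := @sorted_ge T rs hrs i (ltn_ord i).
  move=> hge.
  case: (ltnP (nth 0 rs i + DL) ti) => ha; case: (ltnP (i * T + DL) ti) => hb //=; lia.
rewrite -(big_mkord xpredT (fun i => (i * T + DL < ti) * CL)).
rewrite (@leq_trans (\sum_(0 <= i < n) (i * T + DL < ti) * CL)) //.
  apply: sum_trunc => i hi.
  have : n * T <= i * T by apply: leq_mul.
  case: ltnP => // hlt; lia.
rewrite big_mkord; apply: leq_sum => i _.
rewrite nthp // /job_demand /job_deadline /hc_job.
case: leqP => hh /=.
  by case: ifP.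
rewrite mul1n ifT //; lia.
Qed.
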